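(* Let $\alpha>0$, $\lambda\in\mathbb C$, and $\gamma=1/\sqrt{1+\alpha}$. The equation $$(\lambda^2+\lambda)\varphi+\Big((2\lambda+2)y+\frac{2\alpha}{\sqrt{1+\alpha}+y}\Big)\varphi'+(y^2-1)\varphi''=0 \tag{E1}$$ has a nontrivial solution $\varphi\in C^\infty[-1,1]$ if and only if the equation $$(\lambda^2-\lambda)\psi+\big(2\lambda y'+2\sqrt{1+\alpha}\big)\psi'+(y'^2-1)\psi''=0 \tag{E2}$$ has a nontrivial solution $\psi\in C^\infty[-1,1]$. Moreover, solutions correspond via $$\psi(y')=\Big(\frac{1-\gamma y'}{\sqrt{1-\gamma^2}}\Big)^{-\lambda}\varphi\Big(\frac{y'-\gamma}{1-\gamma y'}\Big).$$
   Context: (E1) is the eigenvalue equation of the linearization at the blow-up profile $U_{\alpha,\infty,\kappa}(s,y)=\alpha s-\alpha\log(\sqrt{1+\alpha}+y)+\kappa$ of the self-similar form of $u_{tt}-u_{xx}=(u_x)^2$; (E2) is the eigenvalue equation of the linearization at its Lorentz transform, which is independent of $y'$. *)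

(* Defs.v *)
From Stdlib Require Import Reals.
From Coquelicot Require Import Coquelicot.

Open Scope R_scope.

Definition I11 (y : R) : Prop := -1 <= y <= 1.

(** Principal complex power [x ^ z] of a positive real [x]:
    [x ^ z = exp (z * ln x)], written out via Euler's formula. *)
Definition rcpow (x : R) (z : C) : C :=
  (RtoC (exp (Re z * ln x)) *
   (RtoC (cos (Im z * ln x)) + Ci * RtoC (sin (Im z * ln x))))%C.

(** [l] is the derivative of [f : R -> C] at [x] relative to the interval
    [-1,1] (one-sided at the endpoints):
    (f (x+h) - f x)/h --> l as h -> 0, h <> 0, x+h in [-1,1]. *)
Definition is_deriv_I11 (f : R -> C) (x : R) (l : C) : Prop :=
  filterlim (fun h : R => ((f (Rplus x h) - f x) / RtoC h)%C)
    (within (fun h : R => h <> 0 /\ I11 (x + h)) (locally 0))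
    (locally l).

(** [D] is a tower of derivatives of [f] on [-1,1]: [D 0 = f] on [-1,1] and
    [D (S n)] is the derivative of [D n] on [-1,1].  Existence of such a
    [D] means [f ∈ C^∞[-1,1]]. *)
Definition deriv_tower (f : R -> C) (D : nat -> R -> C) : Prop :=
  (forall y, I11 y -> D O y = f y) /\
  (forall n y, I11 y -> is_deriv_I11 (D n) y (D (S n) y)).

Definition smooth_I11 (f : R -> C) : Prop := exists D, deriv_tower f D.

Definition nontrivial_I11 (f : R -> C) : Prop := exists y, I11 y /\ f y <> RtoC 0.

Definition solves_E1 (alpha : R) (lam : C) (phi : R -> C) : Prop :=
  exists D, deriv_tower phi D /\
  forall y, I11 y ->
    ((lam * lam + lam) * D O y
     + (RtoC 2 * lam + RtoC 2) * RtoC y * D 1%nat y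
     + RtoC (2 * alpha / (sqrt (1 + alpha) + y)) * D 1%nat y
     + RtoC (y * y - 1) * D 2%nat y)%C = RtoC 0.

Definition solves_E2 (alpha : R) (lam : C) (psi : R -> C) : Prop :=
  exists D, deriv_tower psi D /\
  forall y', I11 y' ->
    ((lam * lam - lam) * D O y'
     + (RtoC 2 * lam * RtoC y' + RtoC (2 * sqrt (1 + alpha))) * D 1%nat y'
     + RtoC (y' * y' - 1) * D 2%nat y')%C = RtoC 0.

Definition gam (alpha : R) : R := 1 / sqrt (1 + alpha).

Definition transf (alpha : R) (lam : C) (phi : R -> C) (y' : R) : C :=
  let g := gam alpha in
  (rcpow ((1 - g * y') / sqrt (1 - g * g)) (- lam)
   * phi ((y' - g) / (1 - g * y'))%R)%C.

(* Main.v *)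
Require Import Defs.
From Stdlib Require Import Reals Lra Lia Psatz ClassicalEpsilon.
From Coquelicot Require Import Coquelicot.
Open Scope R_scope.

Notation FX x := (within (fun h : R => h <> 0 /\ I11 (x + h)) (locally 0)).

#[global] Instance FX_filter x : Filter (FX x).
Proof. apply within_filter, locally_filter. Qed.

Lemma ballR0 (e h : R) : Rabs h < e -> ball 0 e h.
Proof. intros H. unfold ball; simpl. unfold AbsRing_ball, abs, minus, plus, opp; simpl.
  replace (h + - 0) with h by ring. exact H. Qed.

Lemma ballR0' (e h : R) : ball 0 e h -> Rabs h < e.
Proof. unfold ball; simpl. unfold AbsRing_ball, abs, minus, plus, opp; simpl.
  replace (h + - 0) with h by ring. auto. Qed.

Lemma FX_dom x : FX x (fun h => h <> 0 /\ I11 (x+h)).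
Proof. unfold within. apply filter_forall. auto. Qed.

Lemma FX_proper x : I11 x -> ProperFilter' (FX x).
Proof. intros Hx. split; [|apply within_filter, locally_filter].
  unfold within, locally. intros [eps Heps].
  destruct eps as [e He]; simpl in Heps.
  set (d := Rmin (e/2) 1).
  assert (0 < d) by (unfold d; apply Rmin_pos; lra).
  assert (d <= e/2) by apply Rmin_l. assert (d <= 1) by apply Rmin_r.
  unfold I11 in Hx.
  destruct (Rle_dec x 0).
  - apply (Heps d). apply ballR0. rewrite Rabs_pos_eq; lra.
    split. lra. unfold I11; lra.
  - apply (Heps (-d)). apply ballR0. rewrite Rabs_Ropp, Rabs_pos_eq; lra.
    split. lra. unfold I11; lra.
Qed.

Lemma lim_C (g : R -> C) x l :
  (forall eps : posreal, exists delta : posreal, forall h, h <> 0 -> I11 (x+h) ->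
     Rabs h < delta -> Cmod (g h - l) < eps) -> filterlim g (FX x) (locally l).
Proof. intros H P [eps HP]. destruct (H eps) as [d Hd]. exists d.
  intros h Hh [H1 H2]. apply HP. apply C_NormedModule_mixin_compat1.
  apply Hd; auto. apply ballR0'; auto. Qed.

Lemma der_unique f x l1 l2 : I11 x -> is_deriv_I11 f x l1 -> is_deriv_I11 f x l2 -> l1 = l2.
Proof. intros Hx H1 H2. unfold is_deriv_I11 in *.
  eapply (@filterlim_locally_unique _ C_AbsRing C_NormedModule _ (FX_proper x Hx)); eauto. Qed.

Lemma der_ext f g x l : (forall y, I11 y -> f y = g y) -> I11 x ->
  is_deriv_I11 f x l -> is_deriv_I11 g x l.
Proof. intros E Hx H. unfold is_deriv_I11 in *.
  eapply filterlim_within_ext; [|exact H]. intros h [_ Hh]. simpl.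
  rewrite !E; auto. Qed.
Lemma RtoC_neq0 h : h <> 0 -> RtoC h <> 0%C.
Proof. intros H E. apply H. injection E; auto. Qed.

Lemma lim_plus (x : R) (f g : R -> C) a b : let F := FX x in
  filterlim f F (locally a) -> filterlim g F (locally b) ->
  filterlim (fun h => f h + g h)%C F (locally (a+b)%C).
Proof. intros F Hf Hg. apply (filterlim_comp_2 (G:=locally a) (H:=locally b) f g Cplus); auto.
  exact (@filterlim_plus C_AbsRing C_NormedModule a b). Qed.

Lemma locC_of_abs (a:C) (P : C -> Prop) :
  @locally (AbsRing_UniformSpace C_AbsRing) a P -> @locally C_UniformSpace a P.
Proof. intros [eps H].
  assert (He : 0 < eps / 2) by (destruct eps; simpl; lra).
  exists (mkposreal _ He). intros y Hy. apply H.
  pose proof (C_NormedModule_mixin_compat2 a y (mkposreal _ He) Hy) as H2.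
  simpl in H2. simpl. unfold AbsRing_ball. 
  assert (sqrt 2 < 2). { rewrite <- (sqrt_square 2) at 2 by lra. apply sqrt_lt_1; lra. }
  assert (0 <= sqrt 2) by apply sqrt_pos.
  destruct eps as [e Hee]; simpl in *.
  change (Cmod (y - a)%C < e). change (Cmod (y-a)%C < sqrt 2 * (e/2)) in H2. nra. Qed.

Lemma locabs_of_C (a:C) (P : C -> Prop) :
  @locally C_UniformSpace a P -> @locally (AbsRing_UniformSpace C_AbsRing) a P.
Proof. intros [eps H]. exists eps. intros y Hy. apply H.
  apply C_NormedModule_mixin_compat1. exact Hy. Qed.

Lemma lim_mult (x : R) (f g : R -> C) a b : let F := FX x in
  filterlim f F (locally a) -> filterlim g F (locally b) ->
  filterlim (fun h => f h * g h)%C F (locally (a*b)%C).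
Proof. intros F Hf Hg P HP.
  apply (filterlim_comp_2 (G:=@locally (AbsRing_UniformSpace C_AbsRing) a)
     (H:=@locally (AbsRing_UniformSpace C_AbsRing) b) (I:=@locally (AbsRing_UniformSpace C_AbsRing) (a*b)%C) f g Cmult).
  - intros Q HQ. apply Hf. apply locC_of_abs. exact HQ.
  - intros Q HQ. apply Hg. apply locC_of_abs. exact HQ.
  - exact (@filterlim_mult C_AbsRing a b).
  - apply locabs_of_C. exact HP.
Qed.

Lemma lim_eq {T} (F : (T -> Prop) -> Prop) (g : T -> C) (a b : C) :
  b = a -> filterlim g F (locally a) -> filterlim g F (locally b).
Proof. intros ->; auto. Qed.

Lemma RtoC_lim (r : R -> R) x m :
  (forall eps : posreal, exists delta : posreal, forall h, h <> 0 -> Rabs h < delta ->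
     Rabs (r h - m) < eps) -> filterlim (fun h => RtoC (r h)) (FX x) (locally (RtoC m)).
Proof. intros H. apply lim_C. intros eps. destruct (H eps) as [d Hd]. exists d.
  intros h Hh _ Hd'. rewrite <- RtoC_minus, Cmod_R. auto. Qed.

Lemma lim_id x : filterlim (fun h => RtoC h) (FX x) (locally (RtoC 0)).
Proof. apply lim_C. intros eps. exists eps. intros h _ _ H.
  replace (RtoC h - 0)%C with (RtoC h) by ring. rewrite Cmod_R. auto. Qed.

Lemma der_lift (r : R -> R) x l : derivable_pt_lim r x l ->
  is_deriv_I11 (fun y => RtoC (r y)) x (RtoC l).
Proof. intros H. unfold is_deriv_I11.
  apply (filterlim_within_ext _ (fun h => RtoC ((r (x+h) - r x) / h))).
  - intros h [Hh _]. rewrite RtoC_div by auto. rewrite RtoC_minus. reflexivity.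
  - apply RtoC_lim. intros eps. destruct (H eps (cond_pos eps)) as [d Hd].
    exists d. intros h Hh Hd'. apply Hd; auto.
Qed.

Lemma der_cont f x l : is_deriv_I11 f x l ->
  filterlim (fun h => f (Rplus x h)) (FX x) (locally (f x)).
Proof. intros H. unfold is_deriv_I11 in H.
  apply (filterlim_within_ext _ (fun h => f x + RtoC h * ((f (Rplus x h) - f x) / RtoC h))%C).
  - intros h [Hh _]. field. apply RtoC_neq0; auto.
  - apply (lim_eq _ _ (f x + 0 * l)%C); [ring|].
    apply lim_plus. apply filterlim_const. apply lim_mult. apply lim_id. exact H.
Qed.

Lemma der_const c x : is_deriv_I11 (fun _ => c) x (RtoC 0).
Proof. unfold is_deriv_I11.
  apply (filterlim_within_ext _ (fun h : R => RtoC 0)).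
  - intros h [Hh _]. field. apply RtoC_neq0; auto.
  - apply filterlim_const.
Qed.

Lemma der_add f g x lf lg : is_deriv_I11 f x lf -> is_deriv_I11 g x lg ->
  is_deriv_I11 (fun y => f y + g y)%C x (lf + lg)%C.
Proof. intros Hf Hg. unfold is_deriv_I11 in *.
  apply (filterlim_within_ext _ (fun h => (f (Rplus x h) - f x) / RtoC h + (g (Rplus x h) - g x) / RtoC h)%C).
  - intros h [Hh _]. field. apply RtoC_neq0; auto.
  - apply lim_plus; auto.
Qed.

Lemma der_mul f g x lf lg : is_deriv_I11 f x lf -> is_deriv_I11 g x lg ->
  is_deriv_I11 (fun y => f y * g y)%C x (lf * g x + f x * lg)%C.
Proof. intros Hf Hg. pose proof (der_cont _ _ _ Hg) as Cg. unfold is_deriv_I11 in *.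
  apply (filterlim_within_ext _ (fun h => (f (Rplus x h) - f x) / RtoC h * g (Rplus x h) + f x * ((g (Rplus x h) - g x) / RtoC h))%C).
  - intros h [Hh _]. field. apply RtoC_neq0; auto.
  - apply lim_plus; apply lim_mult; auto. apply filterlim_const.
Qed.

Lemma cont_of_der (M : R -> R) x m : derivable_pt_lim M x m ->
  forall eps : posreal, exists delta : posreal, forall h, Rabs h < delta -> Rabs (M (x+h) - M x) < eps.
Proof. intros H eps.
  assert (C0 : continuity_pt M x) by (apply derivable_continuous_pt; exists m; exact H).
  destruct (C0 eps (cond_pos eps)) as [alp [Ha Hb]].
  exists (mkposreal alp Ha). intros h Hh. simpl in Hh.
  destruct (Req_dec h 0) as [->|Hn].
  - rewrite Rplus_0_r, Rminus_diag, Rabs_R0. apply cond_pos.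
  - pose proof (Hb (x+h)) as Hc. simpl in Hc. unfold R_dist in Hc. apply Hc.
    split. split. exact I. lra.
    replace (x + h - x) with h by ring. exact Hh.
Qed.

Lemma der_comp f (M : R -> R) x lf m : I11 x ->
  (forall y, I11 y -> I11 (M y)) ->
  (forall y z, I11 y -> I11 z -> M y = M z -> y = z) ->
  derivable_pt_lim M x m -> is_deriv_I11 f (M x) lf ->
  is_deriv_I11 (fun y => f (M y)) x (lf * RtoC m)%C.
Proof. intros Hx HM Hinj Hd Hf. unfold is_deriv_I11 in *.
  set (k := fun h => M (x+h) - M x).
  assert (Hk : filterlim k (FX x) (FX (M x))).
  { intros P [eps HP]. destruct (cont_of_der M x m Hd eps) as [d Hdd].
    exists d. intros h Hh [Hh0 Hxh]. apply HP.
    - apply ballR0. apply Hdd. apply ballR0'. exact Hh.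
    - split.
      + unfold k. intros E. apply Hh0. assert (x + h = x). apply Hinj; auto. lra. lra.
      + unfold k. replace (M x + (M (x + h) - M x)) with (M (x+h)) by ring. auto. }
  apply (filterlim_within_ext _ (fun h => (f (Rplus (M x) (k h)) - f (M x)) / RtoC (k h) * RtoC (k h / h))%C).
  - intros h [Hh Hxh].
    assert (Hkh : k h <> 0).
    { unfold k. intros E. apply Hh. assert (x + h = x). apply Hinj; auto. lra. lra. }
    replace (Rplus (M x) (k h)) with (M (x+h)) by (unfold k; ring).
    rewrite RtoC_div by auto. field. split; apply RtoC_neq0; auto.
  - apply lim_mult.
    + apply (filterlim_comp _ _ _ k (fun k0 => (f (Rplus (M x) k0) - f (M x)) / RtoC k0)%C _ _ _ Hk Hf).
    + apply RtoC_lim. intros eps. destruct (Hd eps (cond_pos eps)) as [d Hdd].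
      exists d. intros h Hh Hhd. apply Hdd; auto.
Qed.

Lemma der_eq f x l l' : is_deriv_I11 f x l -> l = l' -> is_deriv_I11 f x l'.
Proof. intros H ->; auto. Qed.

Lemma coind (P : (R -> C) -> Prop) :
  (forall f, P f -> exists g, P g /\ forall y, I11 y -> is_deriv_I11 f y (g y)) ->
  forall f, P f -> smooth_I11 f.
Proof.
  intros H f Pf.
  pose (step := fun s : {f | P f} =>
     let e := constructive_indefinite_description _ (H (proj1_sig s) (proj2_sig s)) in
     exist P (proj1_sig e) (proj1 (proj2_sig e))).
  assert (Hs : forall s y, I11 y -> is_deriv_I11 (proj1_sig s) y (proj1_sig (step s) y)).
  { intros s y Hy. unfold step. simpl.
    destruct (constructive_indefinite_description _ _) as [g [Pg Hg]]. simpl. auto. }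
  exists (fun n => proj1_sig (Nat.iter n step (exist P f Pf))).
  split.
  - intros; reflexivity.
  - intros n y Hy. simpl. apply Hs; auto.
Qed.

Lemma smooth_ext f g : smooth_I11 f -> (forall y, I11 y -> f y = g y) -> smooth_I11 g.
Proof. intros [D [H0 H1]] E. exists D. split; auto.
  intros y Hy. rewrite H0, E; auto. Qed.

Lemma smooth_der f : smooth_I11 f ->
  exists g, smooth_I11 g /\ forall y, I11 y -> is_deriv_I11 f y (g y).
Proof. intros [D [H0 H1]]. exists (D 1%nat). split.
  - exists (fun n => D (S n)). split; auto.
  - intros y Hy. apply (der_ext (D O)); auto. Qed.

Lemma smooth_const c : smooth_I11 (fun _ => c).
Proof. apply (coind (fun f => exists c, forall y, I11 y -> f y = c)).
  - intros f [c0 Hc]. exists (fun _ => RtoC 0). split.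
    + exists (RtoC 0); auto.
    + intros y Hy. apply (der_ext (fun _ => c0)). intros; symmetry; auto. auto. apply der_const.
  - exists c; auto. Qed.

Lemma smooth_add f g : smooth_I11 f -> smooth_I11 g -> smooth_I11 (fun y => f y + g y)%C.
Proof. intros Hf Hg.
  apply (coind (fun h => exists f g, smooth_I11 f /\ smooth_I11 g /\ forall y, I11 y -> h y = (f y + g y)%C)).
  - intros h [f1 [g1 [Hf1 [Hg1 E]]]].
    destruct (smooth_der _ Hf1) as [f' [Hf' Df]]. destruct (smooth_der _ Hg1) as [g' [Hg' Dg]].
    exists (fun y => f' y + g' y)%C. split.
    + exists f', g'; auto.
    + intros y Hy. apply (der_ext (fun y => f1 y + g1 y)%C). intros; symmetry; auto. auto.
      apply der_add; auto.
  - exists f, g; auto.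
Qed.

Inductive GP : (R -> C) -> Prop :=
| GP1 f g : smooth_I11 f -> smooth_I11 g -> GP (fun y => f y * g y)%C
| GP2 h1 h2 : GP h1 -> GP h2 -> GP (fun y => h1 y + h2 y)%C.

Lemma smooth_mul f g : smooth_I11 f -> smooth_I11 g -> smooth_I11 (fun y => f y * g y)%C.
Proof. intros Hf Hg. apply (coind GP); [|constructor; auto].
  intros h Hh. induction Hh as [f0 g0 Hf0 Hg0|h1 h2 _ [h1' [P1 D1]] _ [h2' [P2 D2]]].
  - destruct (smooth_der _ Hf0) as [f' [Hf' Df]]. destruct (smooth_der _ Hg0) as [g' [Hg' Dg]].
    exists (fun y => f' y * g0 y + f0 y * g' y)%C. split.
    + apply (GP2 (fun y => f' y * g0 y)%C (fun y => f0 y * g' y)%C); constructor; auto.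
    + intros y Hy. apply der_mul; auto.
  - exists (fun y => h1' y + h2' y)%C. split. constructor; auto.
    intros y Hy. apply der_add; auto.
Qed.

Section Comp.
Variables (M M' : R -> R).
Hypothesis HM : forall y, I11 y -> I11 (M y).
Hypothesis Hinj : forall y z, I11 y -> I11 z -> M y = M z -> y = z.
Hypothesis Hd : forall y, I11 y -> derivable_pt_lim M y (M' y).
Hypothesis Hs : smooth_I11 (fun y => RtoC (M' y)).

Inductive GC : (R -> C) -> Prop :=
| GC1 f g : smooth_I11 f -> smooth_I11 g -> GC (fun y => f (M y) * g y)%C
| GC2 h1 h2 : GC h1 -> GC h2 -> GC (fun y => h1 y + h2 y)%C.

Lemma smooth_comp_gen f g : smooth_I11 f -> smooth_I11 g -> smooth_I11 (fun y => f (M y) * g y)%C.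
Proof. intros Hf Hg. apply (coind GC); [|constructor; auto].
  intros h Hh. induction Hh as [f0 g0 Hf0 Hg0|h1 h2 _ [h1' [P1 D1]] _ [h2' [P2 D2]]].
  - destruct (smooth_der _ Hf0) as [f' [Hf' Df]]. destruct (smooth_der _ Hg0) as [g' [Hg' Dg]].
    exists (fun y => f' (M y) * (RtoC (M' y) * g0 y) + f0 (M y) * g' y)%C. split.
    + apply (GC2 (fun y => f' (M y) * (RtoC (M' y) * g0 y))%C (fun y => f0 (M y) * g' y)%C); constructor; auto.
      apply smooth_mul; auto.
    + intros y Hy. eapply der_eq. apply der_mul.
      apply der_comp; auto. apply Dg; auto. simpl. ring.
  - exists (fun y => h1' y + h2' y)%C. split. constructor; auto.
    intros y Hy. apply der_add; auto.
Qed.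

Lemma smooth_comp f : smooth_I11 f -> smooth_I11 (fun y => f (M y)).
Proof. intros Hf. apply (smooth_ext (fun y => f (M y) * RtoC 1)%C).
  apply smooth_comp_gen; auto. apply smooth_const. intros; ring. Qed.
End Comp.

Section RC.
Variables (b s d : R) (mu : C).
Hypothesis Hd : 0 < d.
Hypothesis Hpos : forall y, I11 y -> 0 < b + s * y.

Lemma der_G y : I11 y ->
  is_deriv_I11 (fun y => rcpow ((b + s*y)/d) mu) y
    (mu * RtoC (s / (b + s*y)) * rcpow ((b + s*y)/d) mu)%C.
Proof. intros Hy. pose proof (Hpos y Hy) as Hp.
  destruct mu as [mr mi]. unfold rcpow. simpl Re. simpl Im.
  set (K := s / (b + s*y)).
  assert (De : derivable_pt_lim (fun y => exp (mr * ln ((b+s*y)/d))) y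
     (mr * K * exp (mr * ln ((b+s*y)/d)))).
  { apply is_derive_Reals. auto_derive.
    - apply Rdiv_lt_0_compat; lra.
    - unfold K, Rdiv. field. repeat split; lra. }
  assert (Dc : derivable_pt_lim (fun y => cos (mi * ln ((b+s*y)/d))) y
     (- (mi * K) * sin (mi * ln ((b+s*y)/d)))).
  { apply is_derive_Reals. auto_derive.
    - apply Rdiv_lt_0_compat; lra.
    - unfold K, Rdiv. field. repeat split; lra. }
  assert (Ds : derivable_pt_lim (fun y => sin (mi * ln ((b+s*y)/d))) y
     (mi * K * cos (mi * ln ((b+s*y)/d)))).
  { apply is_derive_Reals. auto_derive.
    - apply Rdiv_lt_0_compat; lra.
    - unfold K, Rdiv. field. repeat split; lra. }
  eapply der_eq.
  - apply der_mul. apply (der_lift _ _ _ De).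
    apply der_add. apply (der_lift _ _ _ Dc).
    apply der_mul. apply der_const. apply (der_lift _ _ _ Ds).
  - apply injective_projections; simpl; ring.
Qed.

Lemma Dpow k y : I11 y -> derivable_pt_lim (fun y => / (b + s*y)^k) y
   (- INR k * s * (/ (b + s*y)^k * / (b+s*y))).
Proof. intros Hy. pose proof (Hpos y Hy) as Hp. apply is_derive_Reals. auto_derive.
  - apply pow_nonzero. lra.
  - destruct k. simpl. field. lra.
    rewrite S_INR. simpl pred. simpl pow. field. repeat split; try apply pow_nonzero; lra.
Qed.

Lemma smooth_RC c k : smooth_I11 (fun y => c * RtoC (/ (b + s*y)^k) * rcpow ((b + s*y)/d) mu)%C.
Proof.
  apply (coind (fun f => exists c k, forall y, I11 y -> f y = c * RtoC (/ (b + s*y)^k) * rcpow ((b + s*y)/d) mu)%C).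
  - intros f [c0 [k0 E]].
    exists (fun y => c0 * RtoC s * (mu - RtoC (INR k0)) * RtoC (/ (b + s*y)^(S k0)) * rcpow ((b + s*y)/d) mu)%C.
    split.
    + exists (c0 * RtoC s * (mu - RtoC (INR k0)))%C, (S k0). intros; reflexivity.
    + intros y Hy. pose proof (Hpos y Hy) as Hp.
      apply (der_ext (fun y => c0 * RtoC (/ (b + s*y)^k0) * rcpow ((b + s*y)/d) mu)%C).
      intros; symmetry; auto. auto.
      eapply der_eq.
      * apply der_mul. apply der_mul. apply der_const. apply der_lift. apply Dpow; auto.
        apply der_G; auto.
      * replace (/ (b + s*y)^(S k0)) with (/ (b + s*y)^k0 * / (b+s*y)).
        2:{ simpl pow. field. repeat split; try apply pow_nonzero; lra. }
        set (q := / (b + s*y)^k0). set (G := rcpow ((b + s * y) / d) mu).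
        unfold Rdiv. set (r := / (b + s * y)).
        destruct c0, mu, G. apply injective_projections; simpl; ring.
  - exists c, k; auto.
Qed.
End RC.

Lemma rcpow0 x : rcpow x (RtoC 0) = RtoC 1.
Proof. unfold rcpow. simpl. rewrite !Rmult_0_l, exp_0, cos_0, sin_0.
  apply injective_projections; simpl; ring. Qed.

Section Main.
Variables (alpha : R) (lam : C).
Hypothesis Halpha : 0 < alpha.

Definition aa := sqrt (1 + alpha).
Definition sa := sqrt alpha.

Lemma aa_sq : aa * aa = 1 + alpha.
Proof. unfold aa. apply sqrt_sqrt. lra. Qed.
Lemma sa_sq : sa * sa = alpha.
Proof. unfold sa. apply sqrt_sqrt. lra. Qed.
Lemma aa_gt1 : 1 < aa.
Proof. unfold aa. assert (H : sqrt 1 < sqrt (1 + alpha)) by (apply sqrt_lt_1; lra).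
  rewrite sqrt_1 in H. exact H. Qed.
Lemma sa_pos : 0 < sa.
Proof. unfold sa. apply sqrt_lt_R0. lra. Qed.

Definition Tm y := (aa * y - 1) / (aa - y).
Definition Sm y := (aa * y + 1) / (aa + y).
Definition Tp y := alpha * / (aa - y)^2.
Definition Sp y := alpha * / (aa + y)^2.

Lemma I11_bounds y : I11 y -> -1 <= y <= 1.
Proof. auto. Qed.

Lemma Tm_I11 y : I11 y -> I11 (Tm y).
Proof. intros [H1 H2]. pose proof aa_gt1.
  assert (E : Tm y * (aa - y) = aa * y - 1) by (unfold Tm; field; lra).
  unfold I11. generalize (Tm y) E. intros t Et.
  assert ((t + 1) * (aa - y) = (aa - 1) * (y + 1)) by nra.
  assert ((1 - t) * (aa - y) = (aa + 1) * (1 - y)) by nra.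
  assert (0 <= (t + 1) * (aa - y)) by nra.
  assert (0 <= (1 - t) * (aa - y)) by nra.
  split; nra. Qed.

Lemma Sm_I11 y : I11 y -> I11 (Sm y).
Proof. intros [H1 H2]. pose proof aa_gt1.
  assert (E : Sm y * (aa + y) = aa * y + 1) by (unfold Sm; field; lra).
  unfold I11. generalize (Sm y) E. intros t Et.
  assert ((t + 1) * (aa + y) = (aa + 1) * (y + 1)) by nra.
  assert ((1 - t) * (aa + y) = (aa - 1) * (1 - y)) by nra.
  assert (0 <= (t + 1) * (aa + y)) by nra.
  assert (0 <= (1 - t) * (aa + y)) by nra.
  split; nra. Qed.

Lemma Tm_inj y z : I11 y -> I11 z -> Tm y = Tm z -> y = z.
Proof. intros [H1 H2] [H3 H4] E. pose proof aa_gt1. unfold Tm in E.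
  apply Rmult_eq_reg_r with (r := aa*aa - 1); [|nra].
  assert (E2 : (aa * y - 1) * (aa - z) = (aa * z - 1) * (aa - y)).
  { apply (Rmult_eq_compat_r ((aa-y)*(aa-z))) in E. field_simplify in E; lra. }
  nra. Qed.

Lemma Sm_inj y z : I11 y -> I11 z -> Sm y = Sm z -> y = z.
Proof. intros [H1 H2] [H3 H4] E. pose proof aa_gt1. unfold Sm in E.
  apply Rmult_eq_reg_r with (r := aa*aa - 1); [|nra].
  assert (E2 : (aa * y + 1) * (aa + z) = (aa * z + 1) * (aa + y)).
  { apply (Rmult_eq_compat_r ((aa+y)*(aa+z))) in E. field_simplify in E; lra. }
  nra. Qed.

Lemma TS y : I11 y -> Tm (Sm y) = y.
Proof. intros [H1 H2]. pose proof aa_gt1. pose proof aa_sq. unfold Tm, Sm.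
  field. repeat split; intro; nra. Qed.

Lemma ST y : I11 y -> Sm (Tm y) = y.
Proof. intros [H1 H2]. pose proof aa_gt1. pose proof aa_sq. unfold Tm, Sm.
  field. repeat split; intro; nra. Qed.

Lemma Tm_der y : I11 y -> derivable_pt_lim Tm y (Tp y).
Proof. intros [H1 H2]. pose proof aa_gt1. pose proof aa_sq. apply is_derive_Reals.
  unfold Tm, Tp. auto_derive. lra. replace alpha with (aa*aa-1) by lra. field. lra. Qed.

Lemma Sm_der y : I11 y -> derivable_pt_lim Sm y (Sp y).
Proof. intros [H1 H2]. pose proof aa_gt1. pose proof aa_sq. apply is_derive_Reals.
  unfold Sm, Sp. auto_derive. lra. replace alpha with (aa*aa-1) by lra. field. lra. Qed.

End Main.

Lemma rcpow_nz x mu : rcpow x mu <> RtoC 0.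
Proof. intro H. unfold rcpow in H.
  pose proof (f_equal fst H) as Hf. pose proof (f_equal snd H) as Hs. simpl in Hf, Hs.
  set (e := exp (Re mu * ln x)) in *. set (t := Im mu * ln x) in *.
  assert (0 < e) by apply exp_pos. pose proof (sin2_cos2 t) as Hsc.
  assert (cos t = 0) by nra. assert (sin t = 0) by nra. unfold Rsqr in Hsc. nra. Qed.

Lemma rcpow_inv x mu : 0 < x -> (rcpow x mu * rcpow (/ x) mu)%C = RtoC 1.
Proof. intros Hx. unfold rcpow. rewrite ln_Rinv by lra.
  set (L := ln x). replace (Re mu * - L) with (- (Re mu * L)) by ring.
  replace (Im mu * - L) with (- (Im mu * L)) by ring.
  rewrite exp_Ropp, cos_neg, sin_neg.
  pose proof (sin2_cos2 (Im mu * L)) as Hsc. unfold Rsqr in Hsc.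
  assert (exp (Re mu * L) <> 0) by (apply Rgt_not_eq, exp_pos).
  apply injective_projections; simpl; field_simplify; try lra; nra. Qed.

Section Main2.
Variables (alpha : R) (lam : C).
Hypothesis Halpha : 0 < alpha.

Notation aa := (aa alpha).
Notation sa := (sa alpha).
Notation Tm := (Tm alpha).
Notation Sm := (Sm alpha).
Notation Tp := (Tp alpha).
Notation Sp := (Sp alpha).

Definition Ef y := rcpow ((aa + (-1) * y) / sa) (- lam)%C.
Definition Ff y := rcpow ((aa + 1 * y) / sa) (- lam)%C.

Lemma pos_m y : I11 y -> 0 < aa + (-1) * y.
Proof. intros [H1 H2]. pose proof (aa_gt1 alpha Halpha). lra. Qed.
Lemma pos_p y : I11 y -> 0 < aa + 1 * y.
Proof. intros [H1 H2]. pose proof (aa_gt1 alpha Halpha). lra. Qed.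

Lemma smooth_Ef : smooth_I11 Ef.
Proof. apply (smooth_ext (fun y => RtoC 1 * RtoC (/ (aa + (-1)*y)^0) * Ef y)%C).
  apply smooth_RC. apply sa_pos; auto. apply pos_m.
  intros y _. simpl. rewrite Rinv_1. ring. Qed.

Lemma smooth_Ff : smooth_I11 Ff.
Proof. apply (smooth_ext (fun y => RtoC 1 * RtoC (/ (aa + 1*y)^0) * Ff y)%C).
  apply smooth_RC. apply sa_pos; auto. apply pos_p.
  intros y _. simpl. rewrite Rinv_1. ring. Qed.

Lemma smooth_Tp : smooth_I11 (fun y => RtoC (Tp y)).
Proof. apply (smooth_ext (fun y => RtoC alpha * RtoC (/ (aa + (-1)*y)^2) * rcpow ((aa + (-1)*y)/sa) (RtoC 0))%C).
  apply smooth_RC. apply sa_pos; auto. apply pos_m.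
  intros y _. rewrite rcpow0. unfold Tp. replace (aa + -1 * y) with (aa - y) by ring.
  rewrite RtoC_mult. ring. Qed.

Lemma smooth_Sp : smooth_I11 (fun y => RtoC (Sp y)).
Proof. apply (smooth_ext (fun y => RtoC alpha * RtoC (/ (aa + 1*y)^2) * rcpow ((aa + 1*y)/sa) (RtoC 0))%C).
  apply smooth_RC. apply sa_pos; auto. apply pos_p.
  intros y _. rewrite rcpow0. unfold Sp. replace (aa + 1 * y) with (aa + y) by ring.
  rewrite RtoC_mult. ring. Qed.

Lemma sqrt_g : sqrt (1 - gam alpha * gam alpha) = sa / aa.
Proof. pose proof (aa_gt1 alpha Halpha). pose proof (sa_pos alpha Halpha).
  pose proof (aa_sq alpha Halpha). pose proof (sa_sq alpha Halpha).
  unfold gam. change (sqrt (1+alpha)) with aa.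
  assert (E : 1 - 1/aa*(1/aa) = (sa/aa)*(sa/aa)).
  { replace ((sa/aa)*(sa/aa)) with (sa*sa/(aa*aa)) by (field; lra).
    replace (1/aa*(1/aa)) with (1/(aa*aa)) by (field; lra).
    rewrite H1, H2. field. lra. }
  rewrite E. apply sqrt_square. apply Rlt_le, Rdiv_lt_0_compat; lra. Qed.

Lemma transf_eq phi y : I11 y -> transf alpha lam phi y = (Ef y * phi (Tm y))%C.
Proof. intros [Hy1 Hy2]. pose proof (aa_gt1 alpha Halpha). pose proof (sa_pos alpha Halpha).
  unfold transf, Ef. rewrite sqrt_g. unfold gam. change (sqrt (1+alpha)) with aa.
  f_equal. f_equal. field. lra.
  f_equal. unfold Tm. field. split; lra. Qed.

Lemma EF y : I11 y -> (Ef y * Ff (Tm y))%C = RtoC 1.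
Proof. intros [Hy1 Hy2]. pose proof (aa_gt1 alpha Halpha). pose proof (sa_pos alpha Halpha).
  pose proof (aa_sq alpha Halpha). pose proof (sa_sq alpha Halpha).
  unfold Ef, Ff.
  assert (E1 : (aa + -1 * y) / sa = / (sa / (aa - y))) by (field; lra).
  assert (E2 : (aa + 1 * Tm y) / sa = sa / (aa - y)).
  { unfold Tm. apply (Rmult_eq_reg_r (sa * (aa - y))); [|apply Rgt_not_eq; nra].
    field_simplify; try lra. }
  rewrite E1, E2. rewrite Cmult_comm. apply rcpow_inv. apply Rdiv_lt_0_compat; lra. Qed.


Definition E1x (D : nat -> R -> C) y := ((lam * lam + lam) * D O y
     + (RtoC 2 * lam + RtoC 2) * RtoC y * D 1%nat y
     + RtoC (2 * alpha / (sqrt (1 + alpha) + y)) * D 1%nat y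
     + RtoC (y * y - 1) * D 2%nat y)%C.
Definition E2x (D : nat -> R -> C) y' := ((lam * lam - lam) * D O y'
     + (RtoC 2 * lam * RtoC y' + RtoC (2 * sqrt (1 + alpha))) * D 1%nat y'
     + RtoC (y' * y' - 1) * D 2%nat y')%C.

Lemma tower_smooth f D : deriv_tower f D -> smooth_I11 (D O).
Proof. intros [H0 H1]. exists D. split; auto. Qed.

Lemma core phi D : deriv_tower phi D -> exists Dp, deriv_tower (transf alpha lam phi) Dp /\
   forall y, I11 y -> E2x Dp y = (Ef y * RtoC (Tp y) * E1x D (Tm y))%C.
Proof.
  intros HD. pose proof HD as [HD0 HD1].
  pose proof (aa_gt1 alpha Halpha) as Ha1. pose proof (aa_sq alpha Halpha) as Haq.
  assert (HTI := Tm_I11 alpha Halpha). assert (HTinj := Tm_inj alpha Halpha).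
  assert (HTd := Tm_der alpha Halpha).
  assert (Heq : forall z, I11 z -> transf alpha lam phi z = (Ef z * D O (Tm z))%C).
  { intros z Hz. rewrite transf_eq, HD0; auto. }
  assert (Hsm : smooth_I11 (transf alpha lam phi)).
  { apply (smooth_ext (fun y => Ef y * D O (Tm y))%C).
    apply smooth_mul. apply smooth_Ef.
    apply (smooth_comp Tm Tp); auto. apply smooth_Tp. apply (tower_smooth phi); auto.
    intros; symmetry; auto. }
  destruct Hsm as [Dp [Hp0 Hp1]]. exists Dp. split. split; auto.
  assert (dE : forall y, I11 y -> is_deriv_I11 Ef y ((- lam) * RtoC (-1 / (aa + -1 * y)) * Ef y)%C).
  { intros y Hy. apply (der_G aa (-1) sa (-lam)%C). apply sa_pos; auto. apply pos_m. auto. }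
  assert (dTD : forall n y, I11 y -> is_deriv_I11 (fun y => D n (Tm y)) y (D (S n) (Tm y) * RtoC (Tp y))%C).
  { intros n y Hy. apply der_comp; auto. }
  set (Q1 := fun y => (Ef y * (lam * RtoC (/ (aa - y)) * D O (Tm y) + RtoC (Tp y) * D 1%nat (Tm y)))%C).
  assert (H1 : forall y, I11 y -> Dp 1%nat y = Q1 y).
  { intros y Hy. apply (der_unique (Dp O) y); auto.
    apply (der_ext (fun y => Ef y * D O (Tm y))%C).
    intros z Hz. rewrite Hp0, Heq; auto. auto.
    eapply der_eq. apply der_mul. apply dE; auto. apply dTD; auto.
    unfold Q1. replace (-1 / (aa + -1 * y)) with (- (/ (aa - y))).
    rewrite RtoC_opp. ring. destruct Hy. field. lra. }
  intros y Hy. pose proof Hy as [Hy1 Hy2].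
  assert (Dr1 : derivable_pt_lim (fun z => / (aa - z)) y (/ (aa - y) * / (aa - y))).
  { apply is_derive_Reals. auto_derive. lra. field. lra. }
  assert (DTp : derivable_pt_lim Tp y (2 * alpha * / (aa - y)^3)).
  { apply is_derive_Reals. unfold Tp. auto_derive. assert (0 < aa - y) by lra. intro; nra. field. lra. }
  pose proof (der_mul Ef (fun y => lam * RtoC (/ (aa - y)) * D O (Tm y) + RtoC (Tp y) * D 1%nat (Tm y))%C y _ _
     (dE y Hy)
     (der_add _ _ y _ _
        (der_mul _ _ y _ _ (der_mul _ _ y _ _ (der_const lam y) (der_lift _ y _ Dr1)) (dTD O y Hy))
        (der_mul _ _ y _ _ (der_lift _ y _ DTp) (dTD 1%nat y Hy)))) as dQ.
  pose proof (der_unique _ _ _ _ Hy (Hp1 1%nat y Hy)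
     (der_ext _ _ _ _ (fun z Hz => eq_sym (H1 z Hz)) Hy dQ)) as H2.
  unfold E2x. rewrite H2, H1, Hp0, Heq by auto. unfold Q1, E1x. simpl.
  change (sqrt (1 + alpha)) with aa.
  replace (-1 / (aa + -1 * y)) with (- (/ (aa - y))) by (field; lra).
  unfold Tp, Tm.
  set (A := aa) in *. clearbody A.
  replace alpha with (A*A-1) by lra.
  destruct lam as [l1 l2]. destruct (Ef y) as [e1 e2].
  destruct (D O ((A * y - 1) / (A - y))) as [p1 q1].
  destruct (D 1%nat ((A * y - 1) / (A - y))) as [p2 q2].
  destruct (D 2%nat ((A * y - 1) / (A - y))) as [p3 q3].
  apply injective_projections; simpl; field; repeat split; intro; nra.
Qed.


Lemma tower_unique f g D1 D2 : deriv_tower f D1 -> deriv_tower g D2 ->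
  (forall y, I11 y -> f y = g y) -> forall n y, I11 y -> D1 n y = D2 n y.
Proof. intros [A0 A1] [B0 B1] E n. induction n as [|n IH]; intros y Hy.
  - rewrite A0, B0; auto.
  - apply (der_unique (D2 n) y); auto. apply (der_ext (D1 n)); auto. Qed.

Lemma dir2 phi : solves_E1 alpha lam phi -> solves_E2 alpha lam (transf alpha lam phi).
Proof. intros [D [HD HE]]. destruct (core phi D HD) as [Dp [HDp HE2]].
  exists Dp. split; auto. intros y Hy. change (E2x Dp y = RtoC 0). rewrite HE2 by auto.
  assert (H : E1x D (Tm y) = RtoC 0) by (apply HE; apply Tm_I11; auto).
  rewrite H. ring. Qed.

Lemma Cmult3_zero (a b c : C) : a <> RtoC 0 -> b <> RtoC 0 -> (a * b * c)%C = RtoC 0 -> c = RtoC 0.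
Proof. intros Ha Hb H. destruct (Classical_Prop.classic (c = RtoC 0)) as [|Hc]; auto.
  exfalso. apply (Cmult_neq_0 (a*b) c); auto. apply Cmult_neq_0; auto. Qed.

Lemma dir3 psi : solves_E2 alpha lam psi ->
  exists phi, solves_E1 alpha lam phi /\ forall y', I11 y' -> psi y' = transf alpha lam phi y'.
Proof. intros [Dq [HDq HE]].
  pose proof (aa_gt1 alpha Halpha) as Ha1.
  set (phi := fun y => (Ff y * psi (Sm y))%C).
  assert (Hs : smooth_I11 phi).
  { apply smooth_mul. apply smooth_Ff. apply (smooth_comp Sm Sp).
    apply Sm_I11; auto. apply Sm_inj; auto. apply Sm_der; auto. apply smooth_Sp.
    exists Dq; auto. }
  destruct Hs as [D HD]. destruct (core phi D HD) as [Dp [HDp HE2]].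
  assert (Heq : forall y', I11 y' -> psi y' = transf alpha lam phi y').
  { intros y' Hy'. rewrite transf_eq by auto. unfold phi. rewrite ST by auto.
    transitivity ((Ef y' * Ff (Tm y')) * psi y')%C. rewrite EF by auto. ring. ring. }
  exists phi. split; auto. exists D. split; auto.
  intros x Hx. change (E1x D x = RtoC 0).
  assert (HSx : I11 (Sm x)) by (apply Sm_I11; auto).
  rewrite <- (TS alpha Halpha x) by auto.
  apply (Cmult3_zero (Ef (Sm x)) (RtoC (Tp (Sm x)))).
  - apply rcpow_nz.
  - apply RtoC_neq0. unfold Tp. destruct HSx. pose proof (Sm_I11 alpha Halpha x Hx) as [H3 H4].
    apply Rmult_integral_contrapositive_currified. lra.
    apply Rinv_neq_0_compat. apply pow_nonzero. lra.
  - rewrite <- HE2 by auto.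
    assert (TU := tower_unique _ _ _ _ HDp HDq (fun y Hy => eq_sym (Heq y Hy))).
    unfold E2x. rewrite !TU by auto. apply HE; auto.
Qed.

End Main2.

Theorem mainTheorem4 (alpha : R) (lam : C) (Halpha : (0 < alpha)%R) :
  ((exists phi, solves_E1 alpha lam phi /\ nontrivial_I11 phi) <->
   (exists psi, solves_E2 alpha lam psi /\ nontrivial_I11 psi))
  /\ (forall phi, solves_E1 alpha lam phi -> solves_E2 alpha lam (transf alpha lam phi))
  /\ (forall psi, solves_E2 alpha lam psi ->
        exists phi, solves_E1 alpha lam phi /\
          forall y', I11 y' -> psi y' = transf alpha lam phi y').
Proof.
  split; [split|split].
  - intros [phi [Hs [y [Hy Hnz]]]]. exists (transf alpha lam phi). split.
    apply dir2; auto. exists (Sm alpha y). split. apply Sm_I11; auto.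
    rewrite transf_eq, TS by (auto; apply Sm_I11; auto).
    intro H. apply (Cmult_neq_0 (Ef alpha lam (Sm alpha y)) (phi y)); auto. apply rcpow_nz.
  - intros [psi [Hs [y [Hy Hnz]]]]. destruct (dir3 alpha lam Halpha psi Hs) as [phi [Hphi Heq]].
    exists phi. split; auto. exists (Tm alpha y). split. apply Tm_I11; auto.
    intro H. apply Hnz. rewrite Heq, transf_eq by auto. rewrite H. ring.
  - apply dir2; auto.
  - apply dir3; auto.
Qed.
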